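(* Let $m\ge n$ and $s,r$ be positive integers with $s\le m$ and $r\le n$, and let $A\in\mathbb{R}^{m\times n}$. For indeterminates $y,z$ define the $m\times n$ matrix \[ \tilde A(y,z)=\begin{pmatrix}yI_s&0\\0&I_{m-s}\end{pmatrix}A\begin{pmatrix}zI_r&0\\0&I_{n-r}\end{pmatrix} \] and $\theta_A(x,y,z)=\det\big(xI_n+\tilde A(y,z)^T\tilde A(y,z)\big)$. Then \[ \theta_A(x,y,z)=\sum_{j=0}^n\sum_{p=0}^s\sum_{q=0}^r x^{n-j}y^{2p}z^{2q}A^j_{p,q},\qquad A^j_{p,q}=\sum_{\substack{X\subseteq[m],\,Y\subseteq[n],\ |X|=|Y|=j\\ |X\cap[s]|=p,\ |Y\cap[r]|=q}}[A]_{X,Y}^2 . \]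
   Context: For a matrix $C$ and index sets $S,T$ with $|S|=|T|$, $[C]_{S,T}=\det(\{C_{ij}\}_{i\in S,j\in T})$ is the $(S,T)$-minor, with $[C]_{\varnothing,\varnothing}=1$. $[N]=\{1,\dots,N\}$. *)

(* Defs.v *)
From HB Require Import structures.
From mathcomp Require Import all_boot all_order all_algebra.
From mathcomp Require Import reals.
Set Implicit Arguments. Unset Strict Implicit. Unset Printing Implicit Defensive.
Import Order.TTheory GRing.Theory Num.Theory.
Local Open Scope ring_scope.

(* [C]_{X,Y}: determinant of the submatrix of rows X, columns Y, both taken in
   increasing order (enum of a set of ordinals is increasing). Meaningful when
   #|X| = #|Y| (the only case used). [C]_{set0,set0} = det of 0x0 matrix = 1. *)
Definition minor (R : comRingType) (m n : nat) (C : 'M[R]_(m, n))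
    (X : {set 'I_m}) (Y : {set 'I_n}) : R :=
  \det (\matrix_(i < #|X|, j < #|X|) nth 0 [seq C (enum_val i) y | y <- enum Y] j).

Definition blockdiag (R : comRingType) (k s : nat) (y : R) : 'M[R]_k :=
  diag_mx (\row_(i < k) (if (i < s)%N then y else 1)).

Definition Atilde (R : comRingType) (m n s r : nat) (A : 'M[R]_(m, n)) (y z : R)
  : 'M[R]_(m, n) :=
  blockdiag m s y *m A *m blockdiag n r z.

Definition thetaA (R : comRingType) (m n s r : nat) (A : 'M[R]_(m, n)) (x y z : R) : R :=
  \det (x%:M + (Atilde s r A y z)^T *m Atilde s r A y z).

Definition Acoef (R : comRingType) (m n s r : nat) (A : 'M[R]_(m, n)) (j p q : nat) : R :=
  \sum_(X : {set 'I_m} | (#|X| == j) && (#|[set i in X | (i < s)%N]| == p))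
   \sum_(Y : {set 'I_n} | (#|Y| == j) && (#|[set i in Y | (i < r)%N]| == q))
     minor A X Y ^+ 2.

(* Main.v *)
Require Import Defs.
From HB Require Import structures.
From mathcomp Require Import all_boot all_order all_algebra.
From mathcomp Require Import reals.
From mathcomp Require Import fingroup perm.
From mathcomp Require Import zify ring.
Set Implicit Arguments. Unset Strict Implicit. Unset Printing Implicit Defensive.
Import Order.TTheory GRing.Theory Num.Theory.
Local Open Scope ring_scope.
Lemma enum_sorted n (A : {set 'I_n}) : sorted (relpre val ltn) (enum A).
Proof.
rewrite -sorted_map.
rewrite -[enum _](eq_filter (mem_enum _)).
rewrite -(eq_filter (mem_map val_inj _)) -filter_map.
by rewrite (sorted_filter ltn_trans) // unlock val_ord_enum iota_ltn_sorted.
Qed.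

Lemma enum_lift n (i : 'I_n.+1) (S : {set 'I_n.+1}) : i \notin S ->
  enum S = map (lift i) (enum [set j | lift i j \in S]).
Proof.
move=> iS.
apply: (irr_sorted_eq (leT := relpre val ltn)).
- by move=> a b c /= ; apply: ltn_trans.
- by move=> a /=; rewrite ltnn.
- exact: enum_sorted.
- rewrite sorted_map; apply: sub_sorted (enum_sorted _) => a b /=.
  by rewrite /= !ltnNge leq_bump2.
move=> x; rewrite mem_enum.
case: (unliftP i x) => [j ->|->]; last first.
  rewrite (negPf iS); apply/esym/mapP => [[j _ /eqP]]; by rewrite eq_liftF.
by rewrite (mem_map (@lift_inj _ i)) mem_enum inE.
Qed.

Section S.
Variable R : comRingType.

Lemma Ulem n (x : R) (M : 'M[R]_n) (S : {set 'I_n}) k (u : 'I_k -> 'I_n) :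
  codom u = enum S ->
  \det (\matrix_(i, j) (if i \in S then M i j else x *+ (i == j))) =
  x ^+ #|~: S| * \det (mxsub u u M).
Proof.
elim: n M S k u => [|n IH] M S k u hu.
  have hk : k = 0%N.
    by have := congr1 size hu; rewrite size_codom card_ord -cardE; move=> ->;
       apply/eqP; rewrite -leqn0 -[X in (_ <= X)%N](card_ord 0) max_card.
  subst k; rewrite !det_mx00.
  have -> : #|~: S| = 0%N by apply/eqP; rewrite -leqn0 -[X in (_ <= X)%N](card_ord 0) max_card.
  by rewrite expr0 mul1r.
case: (pickP (fun i => i \notin S)) => [i iS|allS]; last first.
  have ST : S = setT by apply/setP => i; rewrite inE; have := allS i; case: (i \in S).
  subst S.
  have hk : k = n.+1 by have := congr1 size hu; rewrite size_codom card_ord -cardE cardsT card_ord.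
  subst k.
  have -> : #|~: [set: 'I_n.+1]| = 0%N by rewrite setCT cards0.
  rewrite expr0 mul1r; congr (\det _); apply/matrixP => a b.
  have uid : forall j, u j = j.
    move=> j; apply: val_inj => /=.
    have := congr1 (fun s => nth j s j) hu; rewrite codomE (nth_map j) ?size_enum_ord //.
    rewrite nth_ord_enum enum_setT -enumT => ->; by rewrite nth_enum_ord.
  by rewrite !mxE inE uid uid.
rewrite (expand_det_row _ i) (bigD1 i) //= big1 => [|j ji]; last first.
  by rewrite mxE (negPf iS) eq_sym (negPf ji) mulr0n mul0r.
rewrite mxE (negPf iS) eqxx mulr1n addr0 /cofactor -signr_odd addnn odd_double expr0 mul1r.
set S' := [set j | lift i j \in S].
set M' := row' i (col' i M).
have E : row' i (col' i (\matrix_(i0, j) (if i0 \in S then M i0 j else x *+ (i0 == j))))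
   = \matrix_(a, b) (if a \in S' then M' a b else x *+ (a == b)).
  by apply/matrixP => a b; rewrite !mxE inE (inj_eq (@lift_inj _ i)).
have eS := enum_lift iS.
have cS : #|S| = #|S'| by rewrite !cardE eS size_map.
have hk : (k <= n)%N.
  have := congr1 size hu; rewrite size_codom card_ord -cardE cS => ->.
  by rewrite -[X in (_ <= X)%N](card_ord n) max_card.
pose u' j := odflt (Ordinal (leq_trans (ltn_ord j) hk)) (unlift i (u j)).
have hu' : forall j, u j = lift i (u' j).
  move=> j; have : u j \in S by rewrite -mem_enum -hu codom_f.
  rewrite /u'; case: (unliftP i (u j)) => [j' -> //|->]; by rewrite (negPf iS).
have hcod : codom u' = enum S'.
  apply: (inj_map (@lift_inj _ i)); rewrite -eS -hu !codomE -map_comp.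
  by apply: eq_map => j /=; rewrite hu'.
rewrite E (IH M' S' k u' hcod).
have -> : mxsub u u M = mxsub u' u' M' by apply/matrixP => a b; rewrite !mxE !hu'.
have cC : #|~: S| = #|~: S'|.+1.
  have := cardsC S; have := cardsC S'; rewrite !card_ord cS. lia.
by rewrite cC exprS mulrA.
Qed.

Lemma det_scalarD n (x : R) (M : 'M[R]_n) :
  \det (x%:M + M) = \sum_(S : {set 'I_n})
     \det (\matrix_(i, j) (if i \in S then M i j else x *+ (i == j))).
Proof.
transitivity (\sum_(s : 'S_n) \sum_(S : {set 'I_n}) (-1) ^+ s *
   \prod_i (if i \in S then M i (s i) else x *+ (i == s i))).
  apply: eq_bigr => s _; rewrite -big_distrr /=; congr (_ * _).
  rewrite -(bigA_distr 1 _ (fun i => M i (s i)) (fun i => x *+ (i == s i))).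
  by apply: eq_bigr => i _; rewrite !mxE addrC.
rewrite exchange_big; apply: eq_bigr => S _; apply: eq_bigr => s _.
by congr (_ * _); apply: eq_bigr => i _; rewrite !mxE.
Qed.
End S.
Definition ue (N : nat) (d : 'I_N) k (X : {set 'I_N}) : 'I_k -> 'I_N :=
  fun i => nth d (enum X) i.
Arguments ue {N} d k X i.

Section UE.
Variables (N : nat) (d : 'I_N) (k : nat) (X : {set 'I_N}).
Hypothesis hX : #|X| = k.

Lemma ue_in i : ue d k X i \in X.
Proof. by rewrite /ue -mem_enum mem_nth // -cardE hX. Qed.

Lemma ue_inj : injective (ue d k X).
Proof.
move=> i j /eqP; rewrite /ue nth_uniq ?enum_uniq // -?cardE ?hX //.
by move/eqP/val_inj.
Qed.

Lemma ue_surj x : x \in X -> exists i, ue d k X i = x.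
Proof.
move=> xX; have hi : (index x (enum X) < k)%N by rewrite -hX cardE index_mem mem_enum.
by exists (Ordinal hi); rewrite /ue /= nth_index // mem_enum.
Qed.

Lemma ue_img : [set ue d k X i | i : 'I_k] = X.
Proof.
apply/setP => x; apply/imsetP/idP => [[i _ ->]|xX]; first exact: ue_in.
by have [i <-] := ue_surj xX; exists i.
Qed.

Lemma conv_sum (R : Type) (idx : R) (op : Monoid.com_law idx)
   (G : {ffun 'I_k -> 'I_N} -> R) :
  \big[op/idx]_(g : {ffun 'I_k -> 'I_N} | [set g i | i : 'I_k] == X) G g =
  \big[op/idx]_(s : 'S_k) G [ffun i => ue d k X (s i)].
Proof.
pose inv (g : {ffun 'I_k -> 'I_N}) : 'S_k :=
  insubd (1%g : 'S_k) [ffun i => odflt i [pick j | ue d k X j == g i]].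
rewrite (reindex (fun s : 'S_k => [ffun i => ue d k X (s i)])); last first.
  exists inv => [s _ | g].
    apply: val_inj; rewrite /inv insubdK; last first.
      apply/injectiveP => a b; rewrite !ffunE.
      case: pickP => [a' /eqP ha|]; last by move/(_ (s a)); rewrite eqxx.
      case: pickP => [b' /eqP hb|]; last by move/(_ (s b)); rewrite eqxx.
      move=> /= eab; subst a'; apply: (@perm_inj _ s); apply: ue_inj; by rewrite -ha -hb.
    apply/ffunP => a; rewrite ffunE.
    case: pickP => [a' /eqP ha|]; last by move/(_ (s a)); rewrite ffunE eqxx.
    by rewrite ffunE in ha; rewrite /= (ue_inj ha) pvalE.
  rewrite inE => /eqP himg.
  have hpick : forall i, ue d k X (odflt i [pick j | ue d k X j == g i]) = g i.
    move=> i; case: pickP => [j /eqP //|none].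
    have : g i \in X by rewrite -himg imset_f.
    by case/ue_surj => j hj; move: (none j); rewrite hj eqxx.
  have ginj : injective g.
    have /imset_injP gi : #|[set g i | i : 'I_k]| == #|'I_k| by rewrite himg hX card_ord.
    by move=> a b; apply: gi.
  apply/ffunP => i; rewrite ffunE /inv -pvalE insubdK; first by rewrite ffunE hpick.
  apply/injectiveP => a b; rewrite !ffunE => hab.
  by apply: ginj; rewrite -hpick -[g b]hpick hab.
apply: eq_bigl => s; apply/eqP; apply: (etrans _ ue_img); apply/setP => x.
apply/imsetP/imsetP => [[i _ ->]|[i _ ->]]; first by exists (s i); rewrite ?ffunE.
by exists ((s^-1)%g i) => //; rewrite ffunE permKV.
Qed.

End UE.

Section CB.
Variable R : comRingType.

Lemma det_mul_expand N k (P : 'M[R]_(k, N)) (Q : 'M[R]_(N, k)) :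
  \det (P *m Q) = \sum_(g : {ffun 'I_k -> 'I_N}) (\prod_i P i (g i)) * \det (rowsub g Q).
Proof.
transitivity (\sum_(s : 'S_k) (-1) ^+ s * \sum_(g : {ffun 'I_k -> 'I_N})
    \prod_i (P i (g i) * Q (g i) (s i))).
  apply: eq_bigr => s _; congr (_ * _).
  rewrite -(bigA_distr_bigA (fun i j => P i j * Q j (s i))).
  by apply: eq_bigr => i _; rewrite mxE.
under eq_bigr do rewrite big_distrr.
rewrite exchange_big; apply: eq_bigr => g _ /=.
rewrite /(\det (rowsub g Q)) big_distrr; apply: eq_bigr => s _ /=.
rewrite big_split /= mulrCA; congr (_ * (_ * _)).
by apply: eq_bigr => i _; rewrite mxE.
Qed.

Lemma cauchy_binet N (d : 'I_N) k (P : 'M[R]_(k, N)) (Q : 'M[R]_(N, k)) :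
  \det (P *m Q) = \sum_(X : {set 'I_N} | #|X| == k)
     \det (colsub (ue d k X) P) * \det (rowsub (ue d k X) Q).
Proof.
rewrite det_mul_expand.
rewrite (partition_big (fun g : {ffun 'I_k -> 'I_N} => [set g i | i : 'I_k]) predT) //=.
rewrite (bigID (fun X : {set 'I_N} => #|X| == k)) /= [X in _ + X]big1 ?addr0; last first.
  move=> X hX; apply: big1 => g /eqP himg.
  have : ~~ injectiveb g.
    apply: contra hX => /injectiveP gi; rewrite -himg.
    by rewrite card_imset // card_ord.
  case/injectivePn => i1 [i2 ne12 e12].
  rewrite (determinant_alternate ne12) ?mulr0 // => j.
  by rewrite !mxE e12.
apply: eq_bigr => X /eqP hX; rewrite (conv_sum d hX _ (fun g => (\prod_i P i (g i)) * \det (rowsub g Q))).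
have E : forall s : 'S_k, rowsub [ffun i => ue d k X (s i)] Q = row_perm s (rowsub (ue d k X) Q).
  by move=> s; apply/matrixP => a b; rewrite !mxE ffunE.
under eq_bigr do rewrite E row_permE det_mulmx det_perm.
rewrite /(\det (colsub _ P)) big_distrl; apply: eq_bigr => s _ /=.
rewrite mulrA [_ * (-1) ^+ _]mulrC; congr (_ * _ * _).
by apply: eq_bigr => i _; rewrite !mxE ffunE.
Qed.
End CB.

Lemma ue_codom N (d : 'I_N) k (X : {set 'I_N}) : #|X| = k -> codom (ue d k X) = enum X.
Proof.
move=> hX; apply: (@eq_from_nth _ d); first by rewrite size_codom card_ord -cardE hX.
move=> i; rewrite size_codom card_ord => hi.
rewrite codomE (nth_map (Ordinal hi)) ?size_enum_ord //.
by rewrite -[i in nth _ (enum 'I_k) i]/(nat_of_ord (Ordinal hi)) nth_ord_enum.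
Qed.

Section Key.
Variable R : comRingType.

Lemma key m n (dm : 'I_m) (dn : 'I_n) (B : 'M[R]_(m, n)) (x : R) :
  \det (x%:M + B^T *m B) = \sum_(Y : {set 'I_n}) x ^+ #|~: Y| *
     \sum_(X : {set 'I_m} | #|X| == #|Y|)
        \det (mxsub (ue dm #|Y| X) (ue dn #|Y| Y) B) ^+ 2.
Proof.
rewrite det_scalarD; apply: eq_bigr => Y _.
rewrite (Ulem _ _ (ue_codom dn (erefl #|Y|))); congr (_ * _).
set u := ue dn #|Y| Y.
have -> : mxsub u u (B^T *m B) = (colsub u B)^T *m colsub u B.
  by rewrite mxsub_mul; congr (_ *m _); apply/matrixP => a b; rewrite !mxE.
rewrite (cauchy_binet dm); apply: eq_bigr => X _.
rewrite expr2; congr (_ * _); last by congr (\det _); apply/matrixP => a b; rewrite !mxE.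
rewrite -det_tr; congr (\det _); apply/matrixP => a b; rewrite !mxE.
by [].
Qed.

End Key.

Section Scale.
Variable R : comRingType.

Lemma prod_ue N (d : 'I_N) k (X : {set 'I_N}) (c : nat) (w : R) : #|X| = k ->
  \prod_(i < k) (if (ue d k X i < c)%N then w else 1) = w ^+ #|[set i in X | (i < c)%N]|.
Proof.
move=> hX.
have -> : \prod_(i < k) (if (ue d k X i < c)%N then w else 1) =
          \prod_(a in [set ue d k X i | i : 'I_k]) (if (a < c)%N then w else 1).
  rewrite big_imset /=; last by move=> a b _ _; apply: ue_inj.
  by apply: eq_bigl => i; rewrite inE.
rewrite ue_img // (bigID (fun a : 'I_N => (a < c)%N)) /= [X in _ * X]big1 ?mulr1; last first.
  by move=> a /andP [_ /negPf ->].
rewrite (eq_bigr (fun _ => w)); last by move=> a /andP [_ ->].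
rewrite prodr_const; congr (_ ^+ _); apply: eq_card => a; by rewrite !inE.
Qed.



Lemma det_scale m n s r (A : 'M[R]_(m, n)) (y z : R) (dm : 'I_m) (dn : 'I_n) k
   (X : {set 'I_m}) (Y : {set 'I_n}) : #|X| = k -> #|Y| = k ->
  \det (mxsub (ue dm k X) (ue dn k Y) (Atilde s r A y z)) =
  y ^+ #|[set i in X | (i < s)%N]| * z ^+ #|[set i in Y | (i < r)%N]| *
  \det (mxsub (ue dm k X) (ue dn k Y) A).
Proof.
move=> hX hY.
have -> : mxsub (ue dm k X) (ue dn k Y) (Atilde s r A y z) =
   diag_mx (\row_i (if (ue dm k X i < s)%N then y else 1)) *m
   mxsub (ue dm k X) (ue dn k Y) A *m
   diag_mx (\row_j (if (ue dn k Y j < r)%N then z else 1)).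
  apply/matrixP => a b.
  by rewrite /Atilde /blockdiag !mul_mx_diag !mul_diag_mx !mxE.
rewrite !det_mulmx !det_diag.
under eq_bigr do rewrite mxE.
under [X in _ * _ * X]eq_bigr do rewrite mxE.
rewrite !prod_ue //; ring.
Qed.

Lemma minorE m n (A : 'M[R]_(m, n)) (dm : 'I_m) (dn : 'I_n) k
   (X : {set 'I_m}) (Y : {set 'I_n}) : #|X| = k -> #|Y| = k ->
  minor A X Y = \det (mxsub (ue dm k X) (ue dn k Y) A).
Proof.
move=> hX hY; subst k; rewrite /minor; congr (\det _); apply/matrixP => a b.
rewrite !mxE (nth_map dn); last by rewrite -cardE hY ltn_ord.
by rewrite (enum_val_nth dm).
Qed.
End Scale.

Lemma card_lt_bound N (X : {set 'I_N}) c : (#|[set i in X | (i < c)%N]| <= c)%N.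
Proof.
rewrite cardE -(size_map val) -[c in (_ <= c)%N](size_iota 0).
apply: uniq_leq_size; first by rewrite map_inj_uniq ?enum_uniq //; exact: val_inj.
by move=> a /mapP [i]; rewrite mem_enum inE => /andP [_ hi] ->; rewrite mem_iota.
Qed.

Lemma sum_part (R : comRingType) (T : finType) (P : pred T) (f : T -> nat) (b : nat) (F : T -> R) :
  (forall t, P t -> (f t <= b)%N) ->
  \sum_(q < b.+1) \sum_(t | P t && (f t == q)) F t = \sum_(t | P t) F t.
Proof.
move=> hb; rewrite [RHS](partition_big (fun t => (inord (f t) : 'I_b.+1)) predT) //=.
apply: eq_bigr => q _; apply: eq_bigl => t.
case Pt: (P t) => //=; rewrite -val_eqE /= inordK //; exact: hb.
Qed.

Unset Implicit Arguments. Set Strict Implicit. Set Printing Implicit Defensive.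

Theorem mainTheorem6 (R : realType) (m n s r : nat) (A : 'M[R]_(m, n))
    (hnm : (n <= m)%N) (hs0 : (0 < s)%N) (hsm : (s <= m)%N)
    (hr0 : (0 < r)%N) (hrn : (r <= n)%N) :
  forall x y z : R,
    thetaA s r A x y z =
    \sum_(j < n.+1) \sum_(p < s.+1) \sum_(q < r.+1)
      x ^+ (n - j) * y ^+ (2 * p) * z ^+ (2 * q) * Acoef s r A j p q.
Proof.
move=> x y z.
have dm : 'I_m := Ordinal (leq_trans hs0 hsm).
have dn : 'I_n := Ordinal (leq_trans hr0 hrn).
pose H (X : {set 'I_m}) (Y : {set 'I_n}) := x ^+ (n - #|Y|) *
   y ^+ (2 * #|[set i in X | (i < s)%N]|) * z ^+ (2 * #|[set i in Y | (i < r)%N]|) *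
   minor A X Y ^+ 2.
transitivity (\sum_(Y : {set 'I_n}) \sum_(X : {set 'I_m} | #|X| == #|Y|) H X Y).
  rewrite /thetaA (key dm dn); apply: eq_bigr => Y _; rewrite big_distrr.
  apply: eq_bigr => X /eqP hX.
  rewrite (det_scale s r A y z dm dn hX (erefl _)) -(minorE A dm dn hX (erefl _)).
  have -> : #|~: Y| = (n - #|Y|)%N by have := cardsC Y; rewrite card_ord; lia.
  by rewrite /H /= !exprMn -!exprM ![(_ * 2)%N]mulnC !mulrA ?expr2 ?mulrA.
symmetry.
transitivity (\sum_(j < n.+1) \sum_(p < s.+1) \sum_(q < r.+1)
   \sum_(X : {set 'I_m} | (#|X| == j) && (#|[set i in X | (i < s)%N]| == p))
   \sum_(Y : {set 'I_n} | (#|Y| == j) && (#|[set i in Y | (i < r)%N]| == q)) H X Y).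
  apply: eq_bigr => j _; apply: eq_bigr => p _; apply: eq_bigr => q _.
  rewrite /Acoef big_distrr; apply: eq_bigr => X /andP [/eqP hXj /eqP hXp].
  rewrite big_distrr; apply: eq_bigr => Y /andP [/eqP hYj /eqP hYq].
  by rewrite /H hXp hYq hYj.
transitivity (\sum_(j < n.+1) \sum_(X : {set 'I_m} | #|X| == j)
   \sum_(Y : {set 'I_n} | #|Y| == j) H X Y).
  apply: eq_bigr => j _.
  rewrite -(sum_part (f := fun X : {set 'I_m} => #|[set i in X | (i < s)%N]|) (b := s));
    last by move=> *; apply: card_lt_bound.
  apply: eq_bigr => p _; rewrite exchange_big; apply: eq_bigr => X _.
  apply: sum_part => Y _; exact: card_lt_bound.
rewrite -(sum_part (P := fun _ : {set 'I_n} => true) (f := fun Y : {set 'I_n} => #|Y|) (b := n)); last first.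
  by move=> Y _; rewrite -[X in (_ <= X)%N](card_ord n) max_card.
apply: eq_bigr => j _; rewrite exchange_big; apply: eq_bigr => Y /eqP hY.
by apply: eq_bigl => X; rewrite hY.
Qed.

Print Assumptions mainTheorem6.
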